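(* $\mathcal M(\mathfrak g,\mu)=\mathcal M(\mathfrak g,\mu)^+\oplus\mathcal M(\mathfrak g,\mu)^0\oplus\mathcal M(\mathfrak g,\mu)^-$, where $\mathcal M(\mathfrak g,\mu)^\pm$ is the subalgebra generated by $\{x^\pm_{i,m}:i\in I,m\in\mathbb Z\}$ and $\mathcal M(\mathfrak g,\mu)^0$ is the subalgebra generated by $\{h_{i,m}:i\in I,m\in\mathbb Z\}$.
   Context: $I=\{0,\dots,\ell\}$, $A=(a_{ij})$ an affine GCM, $\mathfrak g$ its Kac–Moody algebra without derivation with Chevalley generators $\alpha_i^\vee$ and a nondegenerate-on-$\dot{\mathfrak h}$ normalized invariant form $\langle\cdot,\cdot\rangle$ (as in the loop realization; its values $\langle\alpha_i^\vee,\alpha_j^\vee\rangle$ are fixed complex numbers). $(\cdot,\cdot)$: the normalized invariant form on the root lattice $Q$ with $2(\alpha_i,\alpha_j)/(\alpha_i,\alpha_i)=a_{ij}$. $\mu$: a permutation of $I$ of order $N$ with $a_{\mu(i)\mu(j)}=a_{ij}$, assumed non-transitive ($\langle\mu\rangle$ not transitive on $I$); $\xi=e^{2\pi\sqrt{-1}/N}$; $\check\alpha_i=\frac1N\sum_k\alpha_{\mu^k(i)}$, $\check a_{ij}=2(\check\alpha_i,\check\alpha_j)/(\check\alpha_i,\check\alpha_i)$; $s_i=2$ if the $\mu$-orbit of $i$ is $\{i,\mu(i)\}$ with $a_{i\mu(i)}=-1$, else $s_i=1$. $\mathcal M(\mathfrak g,\mu)$: the Lie algebra generated by $h_{i,m},x^\pm_{i,m},c$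 ($i\in I,m\in\mathbb Z$) with relations for all $i,j,m,n$: (T0) $h_{\mu(i),m}=\xi^mh_{i,m}$, $x^\pm_{\mu(i),m}=\xi^mx^\pm_{i,m}$; (T1) $c$ central; (T2) $[h_{i,m},h_{j,n}]=\sum_{k\in\mathbb Z_N}mN\langle\alpha_i^\vee,\alpha^\vee_{\mu^k(j)}\rangle\delta_{m+n,0}\xi^{km}c$; (T3) $[h_{i,m},x^\pm_{j,n}]=\pm\sum_k a_{i\mu^k(j)}\xi^{km}x^\pm_{j,m+n}$; (T4) $[x^+_{i,m},x^-_{j,n}]=\sum_k\delta_{i,\mu^k(j)}(h_{j,m+n}+\frac{mN\langle\alpha_i^\vee,\alpha_i^\vee\rangle}{2}\delta_{m+n,0}c)\xi^{km}$; (T5) $(\mathrm{ad}\,x^\pm_{i,0})^{1-\check a_{ij}}(x^\pm_{j,m})=0$ if $\check a_{ij}\le0$; (T6) $[x^\pm_{i,m_1},[\cdots,[x^\pm_{i,m_{s_i}},x^\pm_{i,m_{s_i+1}}]\cdots]]=0$. *)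

(* Defs.v *)
From HB Require Import structures.
From mathcomp Require Import all_boot all_order all_fingroup all_algebra.
Set Implicit Arguments. Unset Strict Implicit. Unset Printing Implicit Defensive.
Import Order.TTheory GRing.Theory Num.Theory.
Local Open Scope ring_scope.

Record lieAlgebra (R : fieldType) := LieAlgebra {
  lie_sort :> lmodType R;
  lie_br : lie_sort -> lie_sort -> lie_sort;
  lie_brl : forall (a : R) (x y z : lie_sort),
      lie_br (a *: x + y) z = a *: lie_br x z + lie_br y z;
  lie_brr : forall (a : R) (x y z : lie_sort),
      lie_br z (a *: x + y) = a *: lie_br z x + lie_br z y;
  lie_alt : forall x : lie_sort, lie_br x x = 0;
  lie_jacobi : forall x y z : lie_sort,
      lie_br x (lie_br y z) + lie_br y (lie_br z x) + lie_br z (lie_br x y) = 0 }.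

Arguments lie_br {R L} : rename.

Definition lie_hom (R : fieldType) (L L' : lieAlgebra R) (phi : L -> L') : Prop :=
  (forall (a : R) (x y : L), phi (a *: x + y) = a *: phi x + phi y) /\
  (forall x y : L, phi (lie_br x y) = lie_br (phi x) (phi y)).

Definition lie_closed (R : fieldType) (L : lieAlgebra R) (P : L -> Prop) : Prop :=
  [/\ P 0,
      (forall (a : R) (x y : L), P x -> P y -> P (a *: x + y)) &
      (forall x y : L, P x -> P y -> P (lie_br x y))].

Definition lie_generated (R : fieldType) (L : lieAlgebra R) (S : L -> Prop) (x : L)
  : Prop :=
  forall P : L -> Prop, lie_closed P -> (forall y, S y -> P y) -> P x.

Definition direct_sum3 (R : fieldType) (L : lieAlgebra R) (U V W : L -> Prop) : Prop :=
  (forall x : L, exists u v w, [/\ U u, V v, W w & x = u + v + w]) /\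
  (forall u v w : L, U u -> V v -> W w -> u + v + w = 0 ->
      [/\ u = 0, v = 0 & w = 0]).

Definition is_GCM (n : nat) (A : 'M[int]_n) : Prop :=
  [/\ forall i, A i i = 2,
      forall i j, i != j -> A i j <= 0 &
      forall i j, A i j = 0 <-> A j i = 0].

Definition indecomposable (n : nat) (A : 'M[int]_n) : Prop :=
  forall S : {set 'I_n}, S != set0 -> S != setT ->
    exists i j, [/\ i \in S, j \notin S & A i j != 0].

(* Kac, Infinite-dim. Lie algebras, Thm 4.3, type (Aff) (vectors taken rational,
   which is equivalent for an integer matrix). *)
Definition is_affine_GCM (n : nat) (A : 'M[int]_n) : Prop :=
  let Aq := map_mx (fun z : int => z%:~R : rat) A in
  [/\ is_GCM A, indecomposable A,
      (\rank Aq).+1 = n,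
      exists u : 'cV[rat]_n, (forall i, 0 < u i 0) /\ Aq *m u = 0 &
      forall v : 'cV[rat]_n, (forall i, 0 <= (Aq *m v) i 0) -> Aq *m v = 0].

Definition marks_of (n : nat) (A : 'M[int]_n) (a : 'I_n -> nat) : Prop :=
  [/\ forall i, (0 < a i)%N,
      forall i, \sum_j A i j * (a j)%:Z = 0 &
      \big[gcdn/0%N]_i a i = 1%N].

Definition comarks_of (n : nat) (A : 'M[int]_n) (av : 'I_n -> nat) : Prop :=
  [/\ forall j, (0 < av j)%N,
      forall j, \sum_i (av i)%:Z * A i j = 0 &
      \big[gcdn/0%N]_i av i = 1%N].

Section Data.
Variables (n : nat) (A : 'M[int]_n) (a av : 'I_n -> nat) (mu : {perm 'I_n}).

(* normalized invariant form on coroots: <alpha_i^vee, alpha_j^vee> = a_j / a_j^vee * a_ij *)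
Definition coroot_form (C : fieldType) (i j : 'I_n) : C :=
  (a j)%:R / (av j)%:R * (A i j)%:~R.

(* normalized invariant form on roots: (alpha_i, alpha_j) = a_i^vee / a_i * a_ij *)
Definition root_form (i j : 'I_n) : rat := (av i)%:R / (a i)%:R * (A i j)%:~R.

Definition ordN : nat := #[mu]%g.

(* (check alpha_i, check alpha_j), check alpha_i = 1/N sum_k alpha_{mu^k i} *)
Definition check_form (i j : 'I_n) : rat :=
  \sum_(k < ordN) \sum_(l < ordN)
     root_form ((mu ^+ k)%g i) ((mu ^+ l)%g j) / (ordN%:R ^+ 2).

Definition check_a (i j : 'I_n) : rat := 2 * check_form i j / check_form i i.

(* exponent 1 - check a_ij in (T5) (check a_ij is an integer) *)
Definition T5_exp (i j : 'I_n) : nat := `|1 - Num.floor (check_a i j)|%N.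

Definition s_idx (i : 'I_n) : nat :=
  if [&& (mu ^+ 2)%g i == i, mu i != i & A i (mu i) == -1] then 2 else 1.

Definition not_transitive : Prop := exists i j : 'I_n, forall k, (mu ^+ k)%g i != j.

Definition diagram_auto : Prop := forall i j, A (mu i) (mu j) = A i j.
End Data.

Inductive Mgen (n : nat) : Type :=
  | Gh of 'I_n & int
  | Gxp of 'I_n & int
  | Gxm of 'I_n & int
  | Gc.

Definition nested_br (C : fieldType) (L : lieAlgebra C) (x : int -> L)
   (m0 : int) (ms : seq int) : L :=
  foldr (fun m acc => lie_br (x m) acc) (x m0) ms.

Section Relations.
Variables (C : fieldType) (n : nat) (A : 'M[int]_n) (a av : 'I_n -> nat)
          (mu : {perm 'I_n}) (xi : C) (L : lieAlgebra C) (f : Mgen n -> L).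

Let N := ordN mu.
Let B : 'I_n -> 'I_n -> C := @coroot_form n A a av C.
Let h i m := f (Gh i m).
Let xp i m := f (Gxp i m).
Let xm i m := f (Gxm i m).
Let c := f (Gc n).
Let xiz (k : nat) (m : int) : C := xi ^ (k%:Z * m).
Let dlt (m n : int) : C := (m + n == 0)%:R.

Definition M_relations : Prop :=
  (* T0 *)
      (forall i m, h (mu i) m = xi ^ m *: h i m /\
                   xp (mu i) m = xi ^ m *: xp i m /\
                   xm (mu i) m = xi ^ m *: xm i m) /\
      (* T1 *)
      (forall y : L, lie_br c y = 0) /\
      (* T2 *)
      (forall i j m k, lie_br (h i m) (h j k) =
         (\sum_(q < N) (m * N%:Z)%:~R * B i ((mu ^+ q)%g j) * dlt m k * xiz q m) *: c) /\
      (* T3 *)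
      (forall i j m k,
         lie_br (h i m) (xp j k) =
           (\sum_(q < N) (A i ((mu ^+ q)%g j))%:~R * xiz q m) *: xp j (m + k) /\
         lie_br (h i m) (xm j k) =
           - ((\sum_(q < N) (A i ((mu ^+ q)%g j))%:~R * xiz q m) *: xm j (m + k))) /\
      (* T4 *)
      (forall i j m k, lie_br (xp i m) (xm j k) =
         \sum_(q < N) ((i == (mu ^+ q)%g j)%:R * xiz q m) *:
            (h j (m + k) + ((m * N%:Z)%:~R * B i i / 2 * dlt m k) *: c)) /\
      (* T5 *)
      (forall i j m, check_a A a av mu i j <= 0 ->
         iter (T5_exp A a av mu i j) (lie_br (xp i 0)) (xp j m) = 0 /\
         iter (T5_exp A a av mu i j) (lie_br (xm i 0)) (xm j m) = 0) /\
      (* T6 *)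
      (forall i m0 (ms : seq int), size ms = s_idx A mu i ->
         nested_br (xp i) m0 ms = 0 /\ nested_br (xm i) m0 ms = 0).

End Relations.

Definition is_M_presentation (C : fieldType) (n : nat) (A : 'M[int]_n)
    (a av : 'I_n -> nat) (mu : {perm 'I_n}) (xi : C)
    (L : lieAlgebra C) (f : Mgen n -> L) : Prop :=
  M_relations A a av mu xi f /\
  forall (L' : lieAlgebra C) (f' : Mgen n -> L'),
    M_relations A a av mu xi f' ->
    exists phi : L -> L',
      [/\ lie_hom phi, (forall g, phi (f g) = f' g) &
          forall psi : L -> L', lie_hom psi -> (forall g, psi (f g) = f' g) ->
            forall x, psi x = phi x].

Definition M_plus (C : fieldType) (n : nat) (L : lieAlgebra C) (f : Mgen n -> L) :=
  lie_generated (fun y => exists i m, y = f (Gxp i m)).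
Definition M_minus (C : fieldType) (n : nat) (L : lieAlgebra C) (f : Mgen n -> L) :=
  lie_generated (fun y => exists i m, y = f (Gxm i m)).
Definition M_zero (C : fieldType) (n : nat) (L : lieAlgebra C) (f : Mgen n -> L) :=
  lie_generated (fun y => exists i m, y = f (Gh i m)).

(* Main.v *)
Require Import Defs.
From HB Require Import structures.
From mathcomp Require Import all_boot all_order all_fingroup all_algebra.
From mathcomp Require Import zify.
From Stdlib Require Import ClassicalEpsilon ProofIrrelevance.
Set Implicit Arguments. Unset Strict Implicit. Unset Printing Implicit Defensive.
Import Order.TTheory GRing.Theory Num.Theory.
Local Open Scope ring_scope.

Section LieLemmas.
Variables (R : fieldType) (L : lieAlgebra R).
Implicit Types (x y z : L) (a : R).
Local Notation "[[ x , y ]]" := (lie_br x y).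

Lemma br0l y : [[0, y]] = 0 :> L.
Proof.
have := lie_brl 1 (0:L) 0 y; rewrite scale1r addr0 => H.
apply: (@addrI _ (lie_br 0 y)); rewrite addr0; by rewrite scale1r in H.
Qed.
Lemma br0r y : [[y, 0]] = 0 :> L.
Proof.
have := lie_brr 1 (0:L) 0 y; rewrite scale1r addr0 => H.
apply: (@addrI _ (lie_br y 0)); rewrite addr0; by rewrite scale1r in H.
Qed.
Lemma brDl x y z : [[x + y, z]] = [[x, z]] + [[y, z]].
Proof. by have := lie_brl 1 x y z; rewrite !scale1r. Qed.
Lemma brDr x y z : [[z, x + y]] = [[z, x]] + [[z, y]].
Proof. by have := lie_brr 1 x y z; rewrite !scale1r. Qed.
Lemma brZl a x z : [[a *: x, z]] = a *: [[x, z]].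
Proof. by have := lie_brl a x 0 z; rewrite !addr0 br0l addr0. Qed.
Lemma brZr a x z : [[z, a *: x]] = a *: [[z, x]].
Proof. by have := lie_brr a x 0 z; rewrite !addr0 br0r addr0. Qed.
Lemma brNl x z : [[- x, z]] = - [[x, z]].
Proof. by rewrite -scaleN1r brZl scaleN1r. Qed.
Lemma brNr x z : [[z, - x]] = - [[z, x]].
Proof. by rewrite -scaleN1r brZr scaleN1r. Qed.
Lemma brC x y : [[y, x]] = - [[x, y]].
Proof.
have := lie_alt (x + y); rewrite brDl !brDr !lie_alt add0r addr0.
by move/eqP; rewrite addr_eq0 => /eqP ->; rewrite opprK.
Qed.
Lemma brJ x y z : [[x, [[y, z]]]] = [[ [[x, y]], z]] + [[y, [[x, z]]]].
Proof.
have := lie_jacobi x y z.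
rewrite (brC z x) brNr (brC (lie_br x y) z) => /eqP.
rewrite -addrA addr_eq0 => /eqP ->.
by rewrite opprD !opprK addrC.
Qed.
Lemma brsuml (I : Type) (r : seq I) (F : I -> L) z :
  [[\sum_(i <- r) F i, z]] = \sum_(i <- r) [[F i, z]].
Proof. elim: r => [|i r IH]; rewrite ?big_nil ?br0l // !big_cons brDl IH. by []. Qed.
Lemma brsumr (I : Type) (r : seq I) (F : I -> L) z :
  [[z, \sum_(i <- r) F i]] = \sum_(i <- r) [[z, F i]].
Proof. elim: r => [|i r IH]; rewrite ?big_nil ?br0r // !big_cons brDr IH. by []. Qed.
End LieLemmas.

Section Generated.
Variables (R : fieldType) (L : lieAlgebra R).
Implicit Types (S P : L -> Prop).

Lemma gen_ind S P x : lie_closed P -> (forall y, S y -> P y) -> lie_generated S x -> P x.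
Proof. by move=> cP SP; apply. Qed.
Lemma gen_sub S y : S y -> lie_generated S y.
Proof. by move=> Sy P _; apply. Qed.
Lemma gen_closed S : lie_closed (lie_generated S).
Proof.
split.
- by move=> P [] //.
- by move=> a x y gx gy P cP SP; case: (cP) => _ H _; apply: H; [apply: gx|apply: gy].
- by move=> x y gx gy P cP SP; case: (cP) => _ _ H; apply: H; [apply: gx|apply: gy].
Qed.
Lemma cl0 P : lie_closed P -> P 0.
Proof. by case. Qed.
Lemma clD P x y : lie_closed P -> P x -> P y -> P (x + y).
Proof. by case=> _ H _ px py; rewrite -[x]scale1r; apply: H. Qed.
Lemma clZ P a x : lie_closed P -> P x -> P (a *: x).
Proof. by case=> H0 H _ px; rewrite -[_ *: _]addr0; apply: H. Qed.
Lemma clN P x : lie_closed P -> P x -> P (- x).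
Proof. by move=> cP px; rewrite -scaleN1r; apply: clZ. Qed.
Lemma clB P x y : lie_closed P -> P x -> P y -> P (x - y).
Proof. by move=> cP px py; apply: clD => //; apply: clN. Qed.
Lemma clBr P x y : lie_closed P -> P x -> P y -> P (lie_br x y).
Proof. by case=> _ _ H; apply: H. Qed.
Lemma clsum P (I : Type) (r : seq I) (F : I -> L) :
  lie_closed P -> (forall i, P (F i)) -> P (\sum_(i <- r) F i).
Proof.
move=> cP H; elim: r => [|i r IH]; first by rewrite big_nil; apply: cl0.
by rewrite big_cons; apply: clD.
Qed.

Variable P : L -> Prop.
Hypothesis cP : lie_closed P.
Definition pb (x : L) : bool := if excluded_middle_informative (P x) then true else false.
Lemma pbP x : pb x <-> P x.
Proof. by rewrite /pb; case: excluded_middle_informative. Qed.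
Definition ST := {x : L | pb x}.
HB.instance Definition _ := [isSub for (@sval L (fun x => pb x) : ST -> L)].
HB.instance Definition _ := [Choice of ST by <:].
Definition ST0 : ST := exist _ 0 (proj2 (pbP 0) (cl0 cP)).
Definition STadd (x y : ST) : ST :=
  exist _ (val x + val y) (proj2 (pbP _) (clD cP (proj1 (pbP _) (valP x)) (proj1 (pbP _) (valP y)))).
Definition STopp (x : ST) : ST :=
  exist _ (- val x) (proj2 (pbP _) (clN cP (proj1 (pbP _) (valP x)))).
Definition STscale (a : R) (x : ST) : ST :=
  exist _ (a *: val x) (proj2 (pbP _) (clZ a cP (proj1 (pbP _) (valP x)))).
Definition STbr (x y : ST) : ST :=
  exist _ (lie_br (val x) (val y)) (proj2 (pbP _) (clBr cP (proj1 (pbP _) (valP x)) (proj1 (pbP _) (valP y)))).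
Lemma STaddA : associative STadd. Proof. by move=> x y z; apply: val_inj; rewrite /= addrA. Qed.
Lemma STaddC : commutative STadd. Proof. by move=> x y; apply: val_inj; rewrite /= addrC. Qed.
Lemma STadd0 : left_id ST0 STadd. Proof. by move=> x; apply: val_inj; rewrite /= add0r. Qed.
Lemma STaddN : left_inverse ST0 STopp STadd. Proof. by move=> x; apply: val_inj; rewrite /= addNr. Qed.
HB.instance Definition _ := GRing.isZmodule.Build ST STaddA STaddC STadd0 STaddN.
Lemma STscaleA a b v : STscale a (STscale b v) = STscale (a * b) v.
Proof. by apply: val_inj; rewrite /= scalerA. Qed.
Lemma STscale1 : left_id 1 STscale. Proof. by move=> x; apply: val_inj; rewrite /= scale1r. Qed.
Lemma STscaleDr : right_distributive STscale +%R.
Proof. by move=> a x y; apply: val_inj; rewrite /= scalerDr. Qed.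
Lemma STscaleDl v : {morph STscale^~ v: a b / a + b}.
Proof. by move=> a b; apply: val_inj; rewrite /= scalerDl. Qed.
HB.instance Definition _ := GRing.Zmodule_isLmodule.Build R ST STscaleA STscale1 STscaleDr STscaleDl.
Lemma STbrl (a : R) (x y z : ST) : STbr (a *: x + y) z = a *: STbr x z + STbr y z.
Proof. by apply: val_inj; rewrite /= lie_brl. Qed.
Lemma STbrr (a : R) (x y z : ST) : STbr z (a *: x + y) = a *: STbr z x + STbr z y.
Proof. by apply: val_inj; rewrite /= lie_brr. Qed.
Lemma STalt (x : ST) : STbr x x = 0.
Proof. by apply: val_inj; rewrite /= lie_alt. Qed.
Lemma STjac (x y z : ST) : STbr x (STbr y z) + STbr y (STbr z x) + STbr z (STbr x y) = 0.
Proof. by apply: val_inj; rewrite /= lie_jacobi. Qed.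
Definition STlie : lieAlgebra R := @LieAlgebra R ST STbr STbrl STbrr STalt STjac.
Lemma STval_hom : lie_hom (fun x : STlie => val x).
Proof. by split. Qed.
End Generated.

Section Hom.
Variables (R : fieldType) (L1 L2 : lieAlgebra R) (psi : L1 -> L2).
Hypothesis hpsi : lie_hom psi.
Lemma hom0 : psi 0 = 0.
Proof.
case: hpsi => H _; have := H 1 0 0; rewrite scale1r addr0 scale1r => E.
by apply: (@addrI _ (psi 0)); rewrite addr0.
Qed.
Lemma homD x y : psi (x + y) = psi x + psi y.
Proof. by case: hpsi => H _; have := H 1 x y; rewrite !scale1r. Qed.
Lemma homZ a x : psi (a *: x) = a *: psi x.
Proof. by case: hpsi => H _; have := H a x 0; rewrite !addr0 hom0 addr0. Qed.
Lemma homN x : psi (- x) = - psi x.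
Proof. by rewrite -scaleN1r homZ scaleN1r. Qed.
Lemma homBr x y : psi (lie_br x y) = lie_br (psi x) (psi y).
Proof. by case: hpsi. Qed.
Lemma homsum (I : Type) (r : seq I) (F : I -> L1) :
  psi (\sum_(i <- r) F i) = \sum_(i <- r) psi (F i).
Proof. by elim: r => [|i r IH]; rewrite ?big_nil ?hom0 // !big_cons homD IH. Qed.
Lemma homiter k y z : psi (iter k (lie_br y) z) = iter k (lie_br (psi y)) (psi z).
Proof. by elim: k => //= k IH; rewrite homBr IH. Qed.
Lemma homnested (x : int -> L1) m0 ms :
  psi (nested_br x m0 ms) = nested_br (fun m => psi (x m)) m0 ms.
Proof. by elim: ms => //= m ms IH; rewrite homBr IH. Qed.
Hypothesis psi_inj : injective psi.

Lemma rel_reflect (n : nat) (A : 'M[int]_n) a av mu xi (f : Mgen n -> L1) :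
  M_relations A a av mu xi (fun g => psi (f g)) -> M_relations A a av mu xi f.
Proof.
move=> [T0 [T1 [T2 [T3 [T4 [T5 T6]]]]]].
split; [|split; [|split; [|split; [|split; [|split]]]]].
- move=> i m; have [E1 [E2 E3]] := T0 i m.
  by split; [|split]; apply: psi_inj; rewrite homZ.
- by move=> y; apply: psi_inj; rewrite homBr hom0 T1.
- by move=> i j m k; apply: psi_inj; rewrite homBr homZ T2.
- move=> i j m k; have [E1 E2] := T3 i j m k.
  by split; apply: psi_inj; rewrite homBr ?homN homZ.
- move=> i j m k; apply: psi_inj; rewrite homBr T4 homsum.
  by apply: eq_bigr => q _; rewrite homZ homD homZ.
- move=> i j m H; have [E1 E2] := T5 i j m H.
  by split; apply: psi_inj; rewrite homiter hom0.
- move=> i m0 ms H; have [E1 E2] := T6 i m0 ms H.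
  by split; apply: psi_inj; rewrite homnested hom0.
Qed.
End Hom.

Lemma hom_id (R : fieldType) (L : lieAlgebra R) : lie_hom (fun x : L => x).
Proof. by []. Qed.
Lemma hom_comp (R : fieldType) (L1 L2 L3 : lieAlgebra R) (p : L1 -> L2) (q : L2 -> L3) :
  lie_hom p -> lie_hom q -> lie_hom (fun x => q (p x)).
Proof.
move=> hp hq; split=> [a x y|x y]; first by rewrite (homD hp) (homZ hp) (homD hq) (homZ hq).
by rewrite (homBr hp) (homBr hq).
Qed.

Lemma pres_gen (C : fieldType) n (A : 'M[int]_n) a av mu (xi : C) (L : lieAlgebra C)
  (f : Mgen n -> L) : is_M_presentation A a av mu xi f ->
  forall x, lie_generated (fun y => exists g, y = f g) x.
Proof.
move=> [Hrel Huniv] x.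
pose S := fun y => exists g, y = f g.
have cP := gen_closed S.
pose f' : Mgen n -> STlie cP := fun g =>
  exist _ (f g) (proj2 (pbP (lie_generated S) (f g)) (gen_sub (ex_intro _ g erefl))).
have relf' : M_relations A a av mu xi f'.
  apply: (rel_reflect (STval_hom cP)) => //; exact: val_inj.
have [phi [hphi Hphi _]] := Huniv _ f' relf'.
have [phi0 [h0 H0 U0]] := Huniv L f Hrel.
have e1 := U0 (fun y => y) (hom_id L) (fun g => erefl) x.
have e2 := U0 (fun y => val (phi y)) (hom_comp hphi (STval_hom cP)) (fun g => f_equal val (Hphi g)) x.
have := valP (phi x); rewrite -/(pb _ _) => /pbP.
by rewrite e2 -e1.
Qed.

Section AdPres.
Variables (R : fieldType) (L : lieAlgebra R).
Lemma gind (S P : L -> Prop) : lie_closed P -> (forall y, S y -> P y) ->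
  forall x, lie_generated S x -> P x.
Proof. by move=> cP SP x; apply. Qed.
Lemma ad_pres (S : L -> Prop) y : (forall s, S s -> lie_generated S (lie_br y s)) ->
  forall u, lie_generated S u -> lie_generated S (lie_br y u).
Proof.
move=> HS u gu.
have cS := gen_closed S.
suff : lie_generated S (lie_br y u) /\ lie_generated S u by case.
move: u gu; apply: (gind (P := fun u => lie_generated S (lie_br y u) /\ lie_generated S u)); last by move=> s Ss; split; [apply: HS|apply: gen_sub].
split.
- by rewrite br0r; split; apply: (cl0 cS).
- move=> a x z [H1 H2] [H3 H4]; rewrite lie_brr; split.
    by apply: (clD cS) => //; apply: (clZ _ cS).
  by apply: (clD cS) => //; apply: (clZ _ cS).
- move=> x z [H1 H2] [H3 H4]; rewrite brJ; split; last by apply: (clBr cS).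
  by apply: (clD cS) => //; apply: (clBr cS).
Qed.

Lemma ad_pres2 (S T : L -> Prop) :
  (forall t, T t -> forall u, lie_generated S u -> lie_generated S (lie_br t u)) ->
  forall v, lie_generated T v -> forall u, lie_generated S u -> lie_generated S (lie_br v u).
Proof.
move=> HT v gv.
have cS := gen_closed S.
move: v gv; apply: (gind (P := fun v => forall u, lie_generated S u -> lie_generated S (lie_br v u))) => //.
split.
- by move=> u _; rewrite br0l; apply: (cl0 cS).
- move=> a x z H1 H2 u gu; rewrite lie_brl.
  by apply: (clD cS) => //; [apply: (clZ _ cS) => //; apply: H1|apply: H2].
- move=> x z H1 H2 u gu.
  have E := brJ x z u.
  have -> : lie_br (lie_br x z) u = lie_br x (lie_br z u) - lie_br z (lie_br x u).
    by rewrite E addrK.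
  by apply: (clB cS) => //; [apply: H1; apply: H2|apply: H2; apply: H1].
Qed.
End AdPres.

Section Span.
Variables (C : fieldType) (n : nat) (A : 'M[int]_n) (a av : 'I_n -> nat)
  (mu : {perm 'I_n}) (xi : C) (L : lieAlgebra C) (f : Mgen n -> L).
Hypothesis Hrel : M_relations A a av mu xi f.
Hypothesis Hgen : forall x, lie_generated (fun y => exists g, y = f g) x.
Hypothesis Hc : M_zero f (f (Gc n)).

Let Mp := M_plus f.
Let M0 := M_zero f.
Let Mm := M_minus f.
Let cp : lie_closed Mp := gen_closed _.
Let c0 : lie_closed M0 := gen_closed _.
Let cm : lie_closed Mm := gen_closed _.

Lemma h_plus v u : M0 v -> Mp u -> Mp (lie_br v u).
Proof.
move=> gv gu; apply: (ad_pres2 _ gv gu) => t [i [m ->]] {}u {}gu.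
apply: ad_pres gu => s [j [k ->]].
have [_ [_ [_ [T3 _]]]] := Hrel.
rewrite (proj1 (T3 i j m k)); apply: (clZ _ cp); apply: gen_sub; by exists j, (m + k).
Qed.
Lemma h_minus v u : M0 v -> Mm u -> Mm (lie_br v u).
Proof.
move=> gv gu; apply: (ad_pres2 _ gv gu) => t [i [m ->]] {}u {}gu.
apply: ad_pres gu => s [j [k ->]].
have [_ [_ [_ [T3 _]]]] := Hrel.
rewrite (proj2 (T3 i j m k)); apply: (clN cm); apply: (clZ _ cm); apply: gen_sub; by exists j, (m + k).
Qed.

Lemma T4_M0 i m j k : M0 (lie_br (f (Gxp i m)) (f (Gxm j k))).
Proof.
have [_ [_ [_ [_ [T4 _]]]]] := Hrel.
rewrite T4; apply: (clsum _ c0) => q; apply: (clZ _ c0); apply: (clD c0) => //.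
  by apply: gen_sub; exists j, (m + k).
by apply: (clZ _ c0).
Qed.

Definition S0m z := exists v w, [/\ M0 v, Mm w & z = v + w].
Definition S0p z := exists v w, [/\ M0 v, Mp w & z = v + w].

Lemma xp_minus w : Mm w -> forall i m, S0m (lie_br (f (Gxp i m)) w).
Proof.
move=> gw.
suff : Mm w /\ forall i m, S0m (lie_br (f (Gxp i m)) w) by case.
move: w gw; apply: (gind (P := fun w => Mm w /\ forall i m, S0m (lie_br (f (Gxp i m)) w))).
- split.
  + split; first exact: (cl0 cm).
    by move=> i m; exists 0, 0; rewrite br0r addr0; split => //; [apply: (cl0 c0)|apply: (cl0 cm)].
  + move=> b x y [gx Hx] [gy Hy]; split; first by apply: (clD cm) => //; apply: (clZ _ cm).
    move=> i m; have [v1 [w1 [g1 g1' E1]]] := Hx i m; have [v2 [w2 [g2 g2' E2]]] := Hy i m.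
    exists (b *: v1 + v2), (b *: w1 + w2); rewrite lie_brr E1 E2; split.
    * by apply: (clD c0) => //; apply: (clZ _ c0).
    * by apply: (clD cm) => //; apply: (clZ _ cm).
    * by rewrite scalerDr -!addrA; congr (_ + _); rewrite addrCA.
  + move=> x y [gx Hx] [gy Hy]; split; first by apply: (clBr cm).
    move=> i m; have [v1 [w1 [g1 g1' E1]]] := Hx i m; have [v2 [w2 [g2 g2' E2]]] := Hy i m.
    exists 0, (lie_br (lie_br (f (Gxp i m)) x) y + lie_br x (lie_br (f (Gxp i m)) y)).
    split; [exact: (cl0 c0)| |by rewrite add0r brJ].
    rewrite E1 E2 brDl brDr; apply: (clD cm); apply: (clD cm).
    * exact: h_minus.
    * exact: (clBr cm).
    * by rewrite brC; apply: (clN cm); apply: h_minus.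
    * exact: (clBr cm).
- move=> y [j [k ->]]; split; first by apply: gen_sub; exists j, k.
  move=> i m; exists (lie_br (f (Gxp i m)) (f (Gxm j k))), 0; rewrite addr0; split => //.
    exact: T4_M0.
  exact: (cl0 cm).
Qed.

Lemma xm_plus w : Mp w -> forall i m, S0p (lie_br (f (Gxm i m)) w).
Proof.
move=> gw.
suff : Mp w /\ forall i m, S0p (lie_br (f (Gxm i m)) w) by case.
move: w gw; apply: (gind (P := fun w => Mp w /\ forall i m, S0p (lie_br (f (Gxm i m)) w))).
- split.
  + split; first exact: (cl0 cp).
    by move=> i m; exists 0, 0; rewrite br0r addr0; split => //; [apply: (cl0 c0)|apply: (cl0 cp)].
  + move=> b x y [gx Hx] [gy Hy]; split; first by apply: (clD cp) => //; apply: (clZ _ cp).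
    move=> i m; have [v1 [w1 [g1 g1' E1]]] := Hx i m; have [v2 [w2 [g2 g2' E2]]] := Hy i m.
    exists (b *: v1 + v2), (b *: w1 + w2); rewrite lie_brr E1 E2; split.
    * by apply: (clD c0) => //; apply: (clZ _ c0).
    * by apply: (clD cp) => //; apply: (clZ _ cp).
    * by rewrite scalerDr -!addrA; congr (_ + _); rewrite addrCA.
  + move=> x y [gx Hx] [gy Hy]; split; first by apply: (clBr cp).
    move=> i m; have [v1 [w1 [g1 g1' E1]]] := Hx i m; have [v2 [w2 [g2 g2' E2]]] := Hy i m.
    exists 0, (lie_br (lie_br (f (Gxm i m)) x) y + lie_br x (lie_br (f (Gxm i m)) y)).
    split; [exact: (cl0 c0)| |by rewrite add0r brJ].
    rewrite E1 E2 brDl brDr; apply: (clD cp); apply: (clD cp).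
    * exact: h_plus.
    * exact: (clBr cp).
    * by rewrite brC; apply: (clN cp); apply: h_plus.
    * exact: (clBr cp).
- move=> y [j [k ->]]; split; first by apply: gen_sub; exists j, k.
  move=> i m; exists (lie_br (f (Gxm i m)) (f (Gxp j k))), 0; rewrite addr0; split => //.
    by rewrite brC; apply: (clN c0); exact: T4_M0.
  exact: (cl0 cp).
Qed.

Definition Sum3 z := exists u v w, [/\ Mp u, M0 v, Mm w & z = u + v + w].

Lemma Sum3_closed_lin : Sum3 0 /\ forall b x y, Sum3 x -> Sum3 y -> Sum3 (b *: x + y).
Proof.
split.
  by exists 0, 0, 0; split; rewrite ?addr0 //; [apply: (cl0 cp)|apply: (cl0 c0)|apply: (cl0 cm)].
move=> b x y [u1 [v1 [w1 [h1 h2 h3 ->]]]] [u2 [v2 [w2 [k1 k2 k3 ->]]]].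
exists (b *: u1 + u2), (b *: v1 + v2), (b *: w1 + w2); split.
- by apply: (clD cp) => //; apply: (clZ _ cp).
- by apply: (clD c0) => //; apply: (clZ _ c0).
- by apply: (clD cm) => //; apply: (clZ _ cm).
- by rewrite !scalerDr addrACA [X in X + _ = _]addrACA.
Qed.

Lemma ad_Sum3 x z : Sum3 z -> Sum3 (lie_br x z).
Proof.
have [S0 SL] := Sum3_closed_lin.
move: x (Hgen x) z; apply: (gind (P := fun x => forall z, Sum3 z -> Sum3 (lie_br x z))).
- split.
  + by move=> z _; rewrite br0l.
  + by move=> b x y Hx Hy z Hz; rewrite lie_brl; apply: SL; [apply: Hx|apply: Hy].
  + move=> x y Hx Hy z Hz.
    have -> : lie_br (lie_br x y) z = lie_br x (lie_br y z) - lie_br y (lie_br x z).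
      by rewrite brJ addrK.
    have := SL (-1) _ _ (Hy _ (Hx _ Hz)) (Hx _ (Hy _ Hz)).
    by rewrite scaleN1r addrC.
- move=> y [g ->] z [u [v [w [gu gv gw ->]]]]; rewrite !brDr.
  case: g => [i m|i m|i m|].
  + exists (lie_br (f (Gh i m)) u), (lie_br (f (Gh i m)) v), (lie_br (f (Gh i m)) w); split => //.
    * by apply: h_plus => //; apply: gen_sub; exists i, m.
    * by apply: (clBr c0) => //; apply: gen_sub; exists i, m.
    * by apply: h_minus => //; apply: gen_sub; exists i, m.
  + have [v' [w' [gv' gw' E]]] := xp_minus gw i m.
    exists (lie_br (f (Gxp i m)) u + lie_br (f (Gxp i m)) v), v', w'; split => //.
    * apply: (clD cp); first by apply: (clBr cp) => //; apply: gen_sub; exists i, m.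
      by rewrite brC; apply: (clN cp); apply: h_plus => //; apply: gen_sub; exists i, m.
    * by rewrite E !addrA.
  + have [v' [w' [gv' gw' E]]] := xm_plus gu i m.
    exists w', v', (lie_br (f (Gxm i m)) v + lie_br (f (Gxm i m)) w); split => //.
    * apply: (clD cm); last by apply: (clBr cm) => //; apply: gen_sub; exists i, m.
      by rewrite brC; apply: (clN cm); apply: h_minus => //; apply: gen_sub; exists i, m.
    * by rewrite E (addrC v' w') -!addrA.
  + have [_ [T1 _]] := Hrel.
    by rewrite !T1 !addr0.
Qed.

Lemma span x : Sum3 x.
Proof.
have [S0 SL] := Sum3_closed_lin.
move: x (Hgen x); apply: (gind (P := Sum3)).
- split => //; move=> x y _ Hy; exact: ad_Sum3.
- move=> y [g ->]; case: g => [i m|i m|i m|].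
  + exists 0, (f (Gh i m)), 0; split; rewrite ?add0r ?addr0 //; [apply: (cl0 cp)| |apply: (cl0 cm)].
    by apply: gen_sub; exists i, m.
  + exists (f (Gxp i m)), 0, 0; split; rewrite ?addr0 //; [|apply: (cl0 c0)|apply: (cl0 cm)].
    by apply: gen_sub; exists i, m.
  + exists 0, 0, (f (Gxm i m)); split; rewrite ?add0r //; [apply: (cl0 cp)|apply: (cl0 c0)|].
    by apply: gen_sub; exists i, m.
  + exists 0, (f (Gc n)), 0; split; rewrite ?add0r ?addr0 //; [apply: (cl0 cp)|apply: (cl0 cm)].
Qed.
End Span.

Section Vander.
Variables (C : numFieldType) (V : lmodType C).

Lemma vander (E : nat) (c : 'I_E -> V) :
  (forall k : 'I_E, \sum_(e < E) ((k.+1)%:R ^+ e : C) *: c e = 0) -> forall e, c e = 0.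
Proof.
move=> H e0.
pose a : 'rV[C]_E := \row_j (j.+1)%:R.
pose M := Vandermonde E a.
have uM : M \in unitmx.
  rewrite unitmxE det_Vandermonde unitfE; apply/prodf_neq0 => i _; apply/prodf_neq0 => j ij.
  by rewrite !mxE subr_eq0 eqr_nat eqSS; apply/eqP => /val_inj Eij; rewrite Eij ltnn in ij.
pose W := invmx M.
have Hin : forall e : 'I_E, \sum_(k < E) W k e0 *: ((k.+1%:R ^+ e : C) *: c e) = (M *m W) e e0 *: c e.
  move=> e; rewrite mxE scaler_suml; apply: eq_bigr => k _.
  by rewrite scalerA /M /Vandermonde !mxE mulrC.
have : \sum_(k < E) W k e0 *: (\sum_(e < E) ((k.+1)%:R ^+ e : C) *: c e) = c e0.
  under eq_bigr do rewrite scaler_sumr.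
  rewrite exchange_big /=.
  under eq_bigr do rewrite Hin.
  rewrite mulmxV // (bigD1 e0) //= big1 ?addr0; first by rewrite mxE eqxx scale1r.
  by move=> e ne; rewrite mxE (negbTE ne) scale0r.
by move=> <-; apply: big1 => k _; rewrite H scaler0.
Qed.
End Vander.

Section Partition.
Variables (V : nmodType) (I : Type).
Lemma big_partition_nat (E : nat) (key : I -> nat) (F : I -> V) (r : seq I) :
  all (fun p => key p < E)%N r ->
  \sum_(p <- r) F p = \sum_(e < E) \sum_(p <- r | key p == e) F p.
Proof.
elim: r => [|x r IH] /=; first by rewrite big_nil big1 // => e _; rewrite big_nil.
move=> /andP [kx kr]; rewrite big_cons IH //.
under [RHS]eq_bigr do rewrite big_cons.
rewrite [RHS](bigD1 (Ordinal kx)) //= eqxx.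
rewrite [in LHS](bigD1 (Ordinal kx)) //= -addrA; congr (_ + _); congr (_ + _).
apply: eq_bigr => e ne; case: eqP => // E'.
have ee : e = Ordinal kx by apply: val_inj.
by rewrite ee eqxx in ne.
Qed.
End Partition.

Section Scale.
Variables (C : fieldType) (L : lieAlgebra C).
Lemma iter_scale k (s r : C) (y z : L) :
  iter k (lie_br (s *: y)) (r *: z) = (s ^+ k * r) *: iter k (lie_br y) z.
Proof.
elim: k => [|k IH] /=; first by rewrite expr0 mul1r.
by rewrite IH brZl brZr scalerA exprS -mulrA.
Qed.
Lemma nested_scale (s : C) (x : int -> L) m0 ms :
  nested_br (fun m => s *: x m) m0 ms = s ^+ (size ms).+1 *: nested_br x m0 ms.
Proof.
elim: ms => [|m ms IH] /=; first by rewrite expr1.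
by rewrite IH brZl brZr scalerA -exprS.
Qed.
End Scale.

Section Grading.
Variables (C : fieldType) (n : nat) (A : 'M[int]_n) (a av : 'I_n -> nat)
  (mu : {perm 'I_n}) (xi : C) (L : lieAlgebra C) (f : Mgen n -> L).
Hypothesis Hrel : M_relations A a av mu xi f.

Definition ft (t : C) (g : Mgen n) : L :=
  match g with
  | Gh i m => f (Gh i m)
  | Gxp i m => t *: f (Gxp i m)
  | Gxm i m => t^-1 *: f (Gxm i m)
  | Gc => f (Gc n)
  end.

Lemma rel_scale t : t != 0 -> M_relations A a av mu xi (ft t).
Proof.
move=> t0.
have [T0 [T1 [T2 [T3 [T4 [T5 T6]]]]]] := Hrel.
split; [|split; [|split; [|split; [|split; [|split]]]]] => /=.
- move=> i m; have [E1 [E2 E3]] := T0 i m.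
  by split; [|split]; rewrite ?E1 ?E2 ?E3 // !scalerA mulrC.
- exact: T1.
- exact: T2.
- move=> i j m k; have [E1 E2] := T3 i j m k.
  split; first by rewrite brZr E1 !scalerA mulrC.
  by rewrite brZr E2 scalerN !scalerA mulrC.
- move=> i j m k; rewrite brZl brZr scalerA mulfV // scale1r; exact: T4.
- move=> i j m H; have [E1 E2] := T5 i j m H.
  by rewrite !iter_scale E1 E2 !scaler0.
- move=> i m0 ms H; have [E1 E2] := T6 i m0 ms H.
  by rewrite !nested_scale E1 E2 !scaler0.
Qed.
End Grading.

Section LVal.
Variables (C : fieldType) (L : lieAlgebra C).
Definition lval (s : seq (nat * L)) (u : C) : L := \sum_(p <- s) u ^+ p.1 *: p.2.
Definition lbr (s1 s2 : seq (nat * L)) :=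
  [seq (p.1 + q.1, lie_br p.2 q.2)%N | p <- s1, q <- s2].
Lemma lval_br s1 s2 u : lie_br (lval s1 u) (lval s2 u) = lval (lbr s1 s2) u.
Proof.
rewrite /lval /lbr big_allpairs_dep brsuml; apply: eq_bigr => p _.
rewrite brsumr; apply: eq_bigr => q _.
by rewrite brZl brZr scalerA exprD mulrC.
Qed.
Lemma lval_lin b s1 s2 u :
  b *: lval s1 u + lval s2 u = lval (map (fun p => (p.1, b *: p.2)) s1 ++ s2) u.
Proof.
rewrite /lval big_cat big_map /= scaler_sumr; congr (_ + _); apply: eq_bigr => p _.
by rewrite !scalerA mulrC.
Qed.
Lemma lval0 u : lval [::] u = 0. Proof. by rewrite /lval big_nil. Qed.
Lemma lval1 y u : lval [:: (1%N, y)] u = u *: y.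
Proof. by rewrite /lval big_cons big_nil addr0 expr1. Qed.

Lemma graded (S : L -> Prop) (g : C -> C) (Adm : C -> (L -> L) -> Prop) :
  (forall t phi, Adm t phi -> lie_hom phi) ->
  (forall t phi y, Adm t phi -> S y -> phi y = g t *: y) ->
  forall x, lie_generated S x -> exists s, [/\ all (fun p => 0 < p.1)%N s, x = lval s 1 &
     forall t phi, Adm t phi -> phi x = lval s (g t)].
Proof.
move=> Hh HS.
apply: (gind (P := fun x => exists s, [/\ all (fun p => 0 < p.1)%N s, x = lval s 1 &
     forall t phi, Adm t phi -> phi x = lval s (g t)])).
- split.
  + exists [::]; split => //; first by rewrite lval0.
    by move=> t phi H; rewrite lval0 (hom0 (Hh _ _ H)).
  + move=> b x y [s1 [p1 e1 h1]] [s2 [p2 e2 h2]].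
    exists (map (fun p => (p.1, b *: p.2)) s1 ++ s2); split.
    * by rewrite all_cat all_map p2 andbT.
    * by rewrite -lval_lin -e1 -e2.
    * by move=> t phi H; rewrite -lval_lin (homD (Hh _ _ H)) (homZ (Hh _ _ H)) (h1 _ _ H) (h2 _ _ H).
  + move=> x y [s1 [p1 e1 h1]] [s2 [p2 e2 h2]].
    exists (lbr s1 s2); split.
    * apply/allP => p /allpairsP [[q1 q2] [/= k1 k2 ->]] /=.
      by rewrite addn_gt0 (allP p1 _ k1).
    * by rewrite -lval_br -e1 -e2.
    * by move=> t phi H; rewrite -lval_br (homBr (Hh _ _ H)) (h1 _ _ H) (h2 _ _ H).
- move=> y Sy; exists [:: (1%N, y)]; split => //; first by rewrite lval1 scale1r.
  by move=> t phi H; rewrite lval1 (HS _ _ _ H Sy).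
Qed.

Lemma graded0 (S : L -> Prop) (phi : L -> L) :
  lie_hom phi -> (forall y, S y -> phi y = y) ->
  forall x, lie_generated S x -> phi x = x.
Proof.
move=> hp HS; apply: (gind (P := fun x => phi x = x)) => //; split.
- exact: hom0.
- by move=> b x y ex ey; rewrite (homD hp) (homZ hp) ex ey.
- by move=> x y ex ey; rewrite (homBr hp) ex ey.
Qed.
End LVal.

Lemma le_sum_seq (T : eqType) (s : seq T) (k : T -> nat) x :
  x \in s -> (k x <= \sum_(y <- s) k y)%N.
Proof.
elim: s => [|y s IH] //=; rewrite inE big_cons => /orP [/eqP ->|/IH H].
  exact: leq_addr.
by apply: leq_trans H _; apply: leq_addl.
Qed.

Section Direct.
Variables (C : numFieldType) (n : nat) (A : 'M[int]_n) (a av : 'I_n -> nat)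
  (mu : {perm 'I_n}) (xi : C) (L : lieAlgebra C) (f : Mgen n -> L).
Hypothesis Hp : is_M_presentation A a av mu xi f.

Definition Adm (t : C) (phi : L -> L) := t != 0 /\ lie_hom phi /\ forall g, phi (f g) = ft f t g.

Lemma adm_ex t : t != 0 -> exists phi, Adm t phi.
Proof.
move=> t0; have [Hrel Huniv] := Hp.
have [phi [hp Hg _]] := Huniv L (ft f t) (rel_scale Hrel t0).
by exists phi.
Qed.

Lemma direct u v w : M_plus f u -> M_zero f v -> M_minus f w -> u + v + w = 0 ->
  [/\ u = 0, v = 0 & w = 0].
Proof.
move=> Hu Hv Hw Euvw.
have HSp : forall t phi y, Adm t phi -> (exists i m, y = f (Gxp i m)) -> phi y = id t *: y.
  by move=> t phi y [_ [_ Hg]] [i [m ->]]; rewrite Hg.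
have HSm : forall t phi y, Adm t phi -> (exists i m, y = f (Gxm i m)) -> phi y = t^-1 *: y.
  by move=> t phi y [_ [_ Hg]] [i [m ->]]; rewrite Hg.
have HA : forall t phi, Adm t phi -> lie_hom phi by move=> t phi [_ []].
have [s1 [pos1 eu hu]] := graded HA HSp Hu.
have [s2 [pos2 ew hw]] := graded HA HSm Hw.
have hv : forall t phi, Adm t phi -> phi v = v.
  move=> t phi [_ [hp Hg]]; apply: (graded0 hp) Hv.
  by move=> y [i [m ->]]; rewrite Hg.
set D := \sum_(p <- s2) p.1.
have leD : forall p, p \in s2 -> (p.1 <= D)%N by move=> p; apply: le_sum_seq.
set s := map (fun p => (p.1 + D, p.2)%N) s1 ++ (D, v) :: map (fun p => (D - p.1, p.2)%N) s2.
have Hs : forall t, t != 0 -> lval s t = 0.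
  move=> t t0; have [phi Ad] := adm_ex t0.
  have := congr1 phi Euvw; case: (Ad) => _ [hp _].
  rewrite (hom0 hp) !(homD hp) (hu _ _ Ad) (hw _ _ Ad) (hv _ _ Ad) /= => E0.
  have -> : lval s t = t ^+ D *: (lval s1 t + v + lval s2 t^-1).
    rewrite /lval big_cat big_cons !big_map /= !scalerDr !scaler_sumr addrA.
    congr (_ + _ + _).
      by apply: eq_bigr => p _; rewrite scalerA exprD mulrC.
    rewrite big_seq [RHS]big_seq; apply: eq_bigr => p ps; rewrite scalerA; congr (_ *: _).
    by rewrite -{2}(subnK (leD p ps)) exprD exprVn mulfK // expf_neq0.
  by rewrite E0 scaler0.
set E := (\sum_(p <- s1) p.1 + D).+1%N.
have allE : all (fun p => p.1 < E)%N s.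
  rewrite all_cat all_map /= ltnS leq_addl /= all_map; apply/andP; split.
    by apply/allP => p ps /=; rewrite ltnS leq_add2r le_sum_seq.
  apply/allP => p ps /=; rewrite ltnS; apply: leq_trans (leq_subr _ _) _; exact: leq_addl.
pose coef (e : nat) := \sum_(p <- s | p.1 == e) p.2.
have Hcoef : forall e : 'I_E, coef e = 0.
  apply: (vander (c := fun e : 'I_E => coef e)) => k.
  rewrite -[RHS](Hs (k.+1)%:R); last by rewrite pnatr_eq0.
  rewrite /lval (big_partition_nat _ allE); apply: eq_bigr => e _.
  by rewrite scaler_sumr; apply: eq_bigr => p /eqP ->.
pose s1p (e : nat) := \sum_(p <- s1 | (p.1 + D)%N == e) p.2.
have coefE : forall e, coef e = s1p e + ((D == e)%:R *: v) + \sum_(p <- s2 | (D - p.1)%N == e) p.2.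
  move=> e; rewrite /coef big_cat big_cons !big_map /=; case: eqP => _.
    by rewrite scale1r addrA.
  by rewrite scale0r addr0.
have s2z : forall e, (D <= e)%N -> \sum_(p <- s2 | (D - p.1)%N == e) p.2 = 0.
  move=> e De; apply: big1_seq => p /andP [/eqP Ep ps].
  have := allP pos2 p ps; have := leD p ps; rewrite -Ep in De; move=> /= h1 h2; exfalso; lia.
have s1z : forall e, (e <= D)%N -> s1p e = 0.
  move=> e De; apply: big1_seq => p /andP [/eqP Ep ps].
  have := allP pos1 p ps; rewrite -Ep in De; move=> /= h1; exfalso; lia.
have DE : (D < E)%N by rewrite ltnS leq_addl.
have v0 : v = 0.
  have := Hcoef (Ordinal DE); rewrite coefE /= s1z // s2z // eqxx scale1r add0r addr0.
  done.
have s1all : forall e, s1p e = 0.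
  move=> e; case: (leqP e D) => De; first exact: s1z.
  case: (ltnP e E) => eE.
    have := Hcoef (Ordinal eE); rewrite coefE /= s2z ?(ltnW De) //.
    by rewrite (_ : (D == e) = false) ?scale0r ?addr0 //; apply/negbTE; rewrite neq_ltn De.
  apply: big1_seq => p /andP [/eqP Ep ps].
  have : (p.1 + D < E)%N by rewrite ltnS leq_add2r le_sum_seq.
  by rewrite Ep => h; exfalso; lia.
have u0 : u = 0.
  rewrite eu /lval; under eq_bigr do rewrite expr1n scale1r.
  have allE1 : all (fun p => p.1 + D < E)%N s1.
    by apply/allP => p ps /=; rewrite ltnS leq_add2r le_sum_seq.
  rewrite (big_partition_nat _ allE1) big1 // => e _; exact: s1all.
split => //.
by move: Euvw; rewrite u0 v0 !add0r.
Qed.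
End Direct.

Section Comb.
Variables (n : nat) (A : 'M[int]_n) (mu : {perm 'I_n}).
Hypothesis HA : diagram_auto A mu.

Definition sig i : int := \sum_(q < #[mu]%g) A i ((mu ^+ q)%g i).

Lemma muSr q i : (mu ^+ q.+1)%g i = mu ((mu ^+ q)%g i).
Proof. by rewrite expgSr permM. Qed.

Lemma mucomm q i : (mu ^+ q)%g (mu i) = mu ((mu ^+ q)%g i).
Proof. by rewrite -permM -expgS muSr. Qed.

Lemma sig_mu i : sig (mu i) = sig i.
Proof. by apply: eq_bigr => q _; rewrite mucomm HA. Qed.

Lemma orbit_shift1 (R : nmodType) (F : 'I_n -> R) x :
  \sum_(q < #[mu]%g) F ((mu ^+ q)%g x) = \sum_(q < #[mu]%g) F ((mu ^+ q)%g (mu x)).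
Proof.
have Ho := expg_order mu.
move: (order_gt0 mu) Ho; case: #[mu]%g => [|N'] // _ Ho.
rewrite big_ord_recl [RHS]big_ord_recr /= addrC; congr (_ + _).
  by apply: eq_bigr => q _; rewrite /bump /= -permM -expgS.
by rewrite -permM -expgS Ho expg0.
Qed.
Lemma orbit_shift (R : nmodType) (F : 'I_n -> R) x p :
  \sum_(q < #[mu]%g) F ((mu ^+ q)%g x) = \sum_(q < #[mu]%g) F ((mu ^+ q)%g ((mu ^+ p)%g x)).
Proof.
elim: p => [|p IH]; first by rewrite expg0 perm1.
by rewrite IH orbit_shift1 muSr.
Qed.

Lemma sig_orbit p i : sig ((mu ^+ p)%g i) = sig i.
Proof. by elim: p => [|p IH]; rewrite ?expg0 ?perm1 // muSr sig_mu. Qed.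

Lemma sig_pos i0 j0 : is_affine_GCM A -> (forall k, (mu ^+ k)%g i0 != j0) -> 0 < sig i0.
Proof.
move=> [[Hdiag Hoff Hsym] Hind _ _ Hpos] Hj0.
set N := #[mu]%g.
have N0 : (0 < N)%N := order_gt0 mu.
rewrite ltNge; apply/negP => Hle.
set Aq := map_mx (fun z : int => z%:~R : rat) A.
pose orb j := [exists q : 'I_N, (mu ^+ q)%g i0 == j].
pose v : 'cV[rat]_n := \col_j ((\sum_(q < N) ((mu ^+ q)%g i0 == j)%N)%:R).
have Av : forall k, (Aq *m v) k 0 = (\sum_(q < N) A k ((mu ^+ q)%g i0))%:~R.
  move=> k; rewrite !mxE rmorph_sum.
  under eq_bigr do rewrite !mxE natr_sum mulr_sumr.
  rewrite exchange_big /=; apply: eq_bigr => q _.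
  rewrite (bigD1 ((mu ^+ q)%g i0)) //= eqxx mulr1 big1 ?addr0 // => j nj.
  by rewrite eq_sym (negbTE nj) mulr0.
have Ale : forall k, (Aq *m v) k 0 <= 0.
  move=> k; rewrite Av lerz0.
  case: (boolP (orb k)) => [/existsP [p /eqP <-]|nk].
    by rewrite (orbit_shift _ _ p) -/(sig _) sig_orbit.
  apply: sumr_le0 => q _; apply: Hoff; apply: contra nk => /eqP ->.
  by apply/existsP; exists q.
have Av0 : Aq *m v = 0.
  have := Hpos (- v); rewrite mulmxN => H; apply/eqP; rewrite -oppr_eq0; apply/eqP; apply: H.
  by move=> i; rewrite mxE oppr_ge0.
pose S := [set j | orb j].
have i0S : i0 \in S.
  by rewrite inE; apply/existsP; exists (Ordinal N0); rewrite expg0 perm1.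
have H1 : S != set0 by apply/set0Pn; exists i0.
have H2 : S != setT.
  apply/negP => /eqP ST; move: (in_setT j0); rewrite -ST inE => /existsP [q /eqP Hq].
  by move: (Hj0 q); rewrite Hq eqxx.
have [i [j [iS jS Aij]]] := Hind S H1 H2.
move: iS; rewrite inE => /existsP [q /eqP Hq].
have Aji : A j i != 0.
  by apply/eqP => H; move: Aij; rewrite (proj2 (Hsym i j) H) eqxx.
have ij : i != j by apply: contraNneq jS => <-; rewrite inE; apply/existsP; exists q; rewrite Hq.
have Aji' : A j i <= 0 by apply: Hoff; rewrite eq_sym.
have := Av j; rewrite Av0 mxE => /esym /eqP; rewrite intr_eq0 (bigD1 q) //= Hq => /eqP E0.
have rest : \sum_(k < N | k != q) A j ((mu ^+ k)%g i0) <= 0.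
  apply: sumr_le0 => k _; apply: Hoff; apply: contra jS => /eqP ->.
  by rewrite inE; apply/existsP; exists k.
have Alt : A j i < 0 by rewrite lt_neqAle Aji Aji'.
move: rest Alt E0; set r := \sum_(k < N | k != q) _; move=> *; lia.
Qed.
End Comb.

Lemma exists_posB (n : nat) (A : 'M[int]_n) (a av : 'I_n -> nat) (mu : {perm 'I_n}) :
  is_affine_GCM A -> marks_of A a -> comarks_of A av -> diagram_auto A mu ->
  not_transitive mu ->
  exists i, 0 < \sum_(q < #[mu]%g) ((a ((mu ^+ q)%g i))%:R / (av ((mu ^+ q)%g i))%:R
                        * (A i ((mu ^+ q)%g i))%:~R : rat).
Proof.
move=> Haff [apos _ _] [avpos _ _] HA [i0 [j0 Hj0]].
have sp := sig_pos HA Haff Hj0.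
have [[_ Hoff _] _ _ _ _] := Haff.
set N := #[mu]%g.
have N0 : (0 < N)%N := order_gt0 mu.
pose d (j : 'I_n) : rat := (a j)%:R / (av j)%:R.
have dpos : forall j, 0 < d j by move=> j; rewrite divr_gt0 // ltr0n.
case: (@arg_maxP _ rat _ (Ordinal N0) xpredT (fun q : 'I_N => d ((mu ^+ q)%g i0))) => // q0 _ Hmax.
exists ((mu ^+ q0)%g i0).
set i := (mu ^+ q0)%g i0.
apply: (@lt_le_trans _ _ (d i * (sig A mu i)%:~R)).
  by rewrite mulr_gt0 // ltr0z /i sig_orbit.
rewrite /sig rmorph_sum mulr_sumr; apply: ler_sum => q _.
set k := (mu ^+ q)%g i.
case: (eqVneq k i) => [->|ne]; first by [].
have Aik : (A i k)%:~R <= 0 :> rat by rewrite lerz0; apply: Hoff; rewrite eq_sym.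
apply: ler_wnM2r => //.
have -> : k = (mu ^+ ((q0 + q) %% N))%g i0.
  by rewrite expg_mod_order expgD permM.
exact: (Hmax (Ordinal (ltn_pmod _ N0))).
Qed.

Lemma c_in_M0 (C : numFieldType) n (A : 'M[int]_n) a av mu (xi : C) (L : lieAlgebra C)
  (f : Mgen n -> L) :
  is_affine_GCM A -> marks_of A a -> comarks_of A av -> diagram_auto A mu ->
  not_transitive mu -> (ordN mu).-primitive_root xi -> M_relations A a av mu xi f ->
  M_zero f (f (Gc n)).
Proof.
move=> Haff Hm Hcm HA Hnt Hxi Hrel.
have [i Hi] := exists_posB Haff Hm Hcm HA Hnt.
have [_ [_ [T2 _]]] := Hrel.
have E := T2 i i (ordN mu)%:Z (- (ordN mu)%:Z).
set N := ordN mu in E *.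
have N0 : (0 < N)%N := order_gt0 mu.
set ss := \sum_(q < _) _ in Hi.
have Hk : \sum_(q < N) (N%:Z * N%:Z)%:~R * coroot_form A a av C i ((mu ^+ q)%g i)
     * (N%:Z - N%:Z == 0)%:R * xi ^ (q%:Z * N%:Z) = (N%:Z * N%:Z)%:~R * ratr ss.
  rewrite subrr eqxx /ss rmorph_sum mulr_sumr; apply: eq_bigr => q _.
  rewrite -PoszM -exprnP mulnC exprM (prim_expr_order Hxi) expr1n !mulr1.
  by rewrite /coroot_form !rmorphM /= fmorphV /= !ratr_nat ratr_int.
rewrite Hk in E.
have k0 : (N%:Z * N%:Z)%:~R * ratr ss != 0 :> C.
  rewrite mulf_neq0 //; first by rewrite intr_eq0 mulf_neq0 // -lt0n.
  by rewrite fmorph_eq0; apply: lt0r_neq0.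
have -> : f (Gc n) = ((N%:Z * N%:Z)%:~R * ratr ss)^-1 *: lie_br (f (Gh i N)) (f (Gh i (- N%:Z))).
  by rewrite E scalerA mulVf // scale1r.
apply: (clZ _ (gen_closed _)); apply: (clBr (gen_closed _)); apply: gen_sub.
  by exists i, N.
by exists i, (- N%:Z).
Qed.

Theorem mainTheorem16 (C : numClosedFieldType) (l : nat) (A : 'M[int]_l.+1)
    (a av : 'I_l.+1 -> nat) (mu : {perm 'I_l.+1}) (xi : C)
    (L : lieAlgebra C) (f : Mgen l.+1 -> L) :
  is_affine_GCM A -> marks_of A a -> comarks_of A av ->
  diagram_auto A mu -> not_transitive mu ->
  (ordN mu).-primitive_root xi ->
  is_M_presentation A a av mu xi f ->
  direct_sum3 (M_plus f) (M_zero f) (M_minus f).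
Proof.
move=> Haff Hm Hcm HA Hnt Hxi Hp.
have Hrel := proj1 Hp.
have Hc := c_in_M0 Haff Hm Hcm HA Hnt Hxi Hrel.
have Hgen := pres_gen Hp.
split.
- by move=> x; exact: (span Hrel Hgen Hc x).
- by move=> u v w Hu Hv Hw E0; exact: (direct Hp Hu Hv Hw E0).
Qed.
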